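(* Let $X\subset\mathcal A^{\mathbb Z}$ be a shift of finite type given by a $0$-$1$ adjacency matrix $M$ indexed by the finite alphabet $\mathcal A$ (so $X=\{x:M_{x_ix_{i+1}}=1\ \forall i\}$), and suppose $M^2>0$ (all entries positive). Let $c_S^n=2^{-n}$ for all $S$. Then $$\operatorname{Asc}(X,\mathscr U_0,\sigma)=\frac14\sum_{k=1}^\infty\frac{\log|\mathscr L_{k}(X)|}{2^k}.$$
   Context: $\sigma$ is the shift. $\mathscr U_0$ is the open cover (partition) of $X$ by rank-0 cylinders $\{x\in X:x_0=a\}$, $a\in\mathcal A$. $\mathscr L_k(X)$ is the set of words of length $k$ occurring in points of $X$. For $S\subset n^*=\{0,\dots,n-1\}$, $\mathscr U_S=\bigvee_{i\in S}\sigma^{-i}\mathscr U$ and $N(\cdot)$ is the minimal cardinality of a subcover; $\operatorname{Asc}(X,\mathscr U,\sigma)=\lim_{n\to\infty}\frac1n\sum_{S\subset n^*}c_S^n\log N(\mathscr U_S)$. *)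

(* Defs.v *)
From HB Require Import structures.
From mathcomp Require Import all_boot all_order all_algebra.
From mathcomp Require Import all_classical all_reals all_analysis.
Set Implicit Arguments. Unset Strict Implicit. Unset Printing Implicit Defensive.
Import Order.TTheory GRing.Theory Num.Theory numFieldNormedType.Exports.
Local Open Scope classical_set_scope.
Local Open Scope ring_scope.

Definition SFT (m : nat) (M : 'M[nat]_m) : set (int -> 'I_m) :=
  [set x | forall i : int, M (x i) (x (i + 1)) = 1%N].

Definition lang (m : nat) (M : 'M[nat]_m) (k : nat) : {set k.-tuple 'I_m} :=
  [set w : k.-tuple 'I_m | `[< exists2 x, SFT M x &
       exists j : int, forall i : 'I_k, x (j + (i : nat)%:Z) = tnth w i >] ].

(** N(U): minimal cardinality of a subfamily of the family U (indexed by a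
    finite type I) covering Y.  (Defaults to #|I| if no subfamily covers Y,
    which never happens for the covers considered below.) *)
Definition Ncov (T : Type) (I : finType) (U : I -> set T) (Y : set T) : nat :=
  \big[minn/#|I|]_(F : {set I} |
      `[< forall y, Y y -> exists2 i, i \in F & U i y >]) #|F|.

(** The elements of U_S = \/_{i in S} sigma^{-i} U_0 (as a cover of X):
    for each pattern p on {0..n-1}, the set {x in X : x_i = p_i, i in S}. *)
Definition joinU (m : nat) (M : 'M[nat]_m) (n : nat) (S : {set 'I_n})
    (p : {ffun 'I_n -> 'I_m}) : set (int -> 'I_m) :=
  [set x | SFT M x /\ forall i : 'I_n, i \in S -> x (i : nat)%:Z = p i].

Definition N_US (m : nat) (M : 'M[nat]_m) (n : nat) (S : {set 'I_n}) : nat :=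
  Ncov (joinU M S) (SFT M).

Definition asc_term (R : realType) (m : nat) (M : 'M[nat]_m) (n : nat) : R :=
  n%:R^-1 * \sum_(S : {set 'I_n}) (2 ^- n) * ln (N_US M S)%:R.

Definition rhs_term (R : realType) (m : nat) (M : 'M[nat]_m) (k : nat) : R :=
  ln (#|lang M k|)%:R / 2 ^+ k.

(* Main.v *)
Require Import Defs.
From HB Require Import structures.
From mathcomp Require Import all_boot all_order all_algebra.
From mathcomp Require Import all_classical all_reals all_analysis.
Import Order.TTheory GRing.Theory Num.Theory numFieldNormedType.Exports.
Local Open Scope classical_set_scope.
Local Open Scope ring_scope.
Set Implicit Arguments. Unset Strict Implicit. Unset Printing Implicit Defensive.
From mathcomp Require Import zify ring lra.

Lemma odd_abs_succ (i : int) : odd `|(i + 1)%R|%N = ~~ odd `|i|%N.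
Proof.
case: i => n /=; first by rewrite addn1.
by rewrite NegzE -addn1 PoszD opprD subrK abszN /= negbK.
Qed.

Lemma glue (m : nat) (M : 'M[nat]_m)
    (M01 : forall a b : 'I_m, M a b = 0%N \/ M a b = 1%N)
    (M2pos : forall a b : 'I_m, (0 < (M *m M) a b)%N) (a b : 'I_m) :
  exists c, M a c = 1%N /\ M c b = 1%N.
Proof.
have [//|H] := pselect (exists c, M a c = 1%N /\ M c b = 1%N).
have := M2pos a b; rewrite mxE big1 // => c _.
case: (M01 a c) => h1; first by rewrite h1 mul0r.
case: (M01 c b) => h2; first by rewrite h2 mulr0.
by exfalso; apply: H; exists c.
Qed.

Lemma SFT_nonempty (m : nat) (M : 'M[nat]_m)
    (M01 : forall a b : 'I_m, M a b = 0%N \/ M a b = 1%N)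
    (M2pos : forall a b : 'I_m, (0 < (M *m M) a b)%N) (a0 : 'I_m) :
  exists x, SFT M x.
Proof.
have [c [h1 h2]] := glue M01 M2pos a0 a0.
exists (fun i : int => if odd `|i|%N then c else a0) => i.
by rewrite odd_abs_succ; case: (odd _).
Qed.

Lemma SFT_shift (m : nat) (M : 'M[nat]_m) x (j : int) :
  SFT M x -> SFT M (fun i => x (i + j)).
Proof. by move=> h i; rewrite (addrAC i 1 j); apply: h. Qed.

Lemma bigmin_le_nat (I : eqType) (r : seq I) (P : pred I) (F : I -> nat) idx x :
  x \in r -> P x -> (\big[minn/idx]_(i <- r | P i) F i <= F x)%N.
Proof.
elim: r => //= y r IH; rewrite inE big_cons; case/orP=> [/eqP<-|xr] Px.
  by rewrite Px geq_minl.
case: (P y); last exact: IH.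
exact: leq_trans (geq_minr _ _) (IH xr Px).
Qed.

Definition canon (m n : nat) (a0 : 'I_m) (S : {set 'I_n})
  (p : {ffun 'I_n -> 'I_m}) : bool := [forall i, (i \notin S) ==> (p i == a0)].

Definition Q (m : nat) (M : 'M[nat]_m) (n : nat) (a0 : 'I_m) (S : {set 'I_n})
  : {set {ffun 'I_n -> 'I_m}} :=
  [set p | canon a0 S p && `[< exists x, joinU M S p x >]].

Definition canf (m n : nat) (a0 : 'I_m) (S : {set 'I_n}) (p : 'I_n -> 'I_m)
  : {ffun 'I_n -> 'I_m} := [ffun i => if i \in S then p i else a0].

Lemma canf_canon m n (a0 : 'I_m) (S : {set 'I_n}) p : canon a0 S (canf a0 S p).
Proof. by apply/forallP => i; apply/implyP => /negbTE hi; rewrite ffunE hi. Qed.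

Lemma canon_eq m n (a0 : 'I_m) (S : {set 'I_n}) p q :
  canon a0 S p -> canon a0 S q -> (forall i, i \in S -> p i = q i) -> p = q.
Proof.
move=> /forallP hp /forallP hq e; apply/ffunP => i.
case: (boolP (i \in S)) => hi; first exact: e.
by rewrite (eqP (implyP (hp i) hi)) (eqP (implyP (hq i) hi)).
Qed.

Lemma N_US_Q (m : nat) (M : 'M[nat]_m) (n : nat) (a0 : 'I_m) (S : {set 'I_n}) :
  N_US M S = #|Q M a0 S|.
Proof.
rewrite /N_US /Ncov; apply/eqP; rewrite eqn_leq; apply/andP; split.
  apply: bigmin_le_nat; first exact: mem_index_enum.
  apply/asboolP => y Xy.
  exists (canf a0 S (fun i => y (i : nat)%:Z)).
    rewrite inE canf_canon /=; apply/asboolP; exists y; split => // i iS.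
    by rewrite ffunE iS.
  by split => // i iS; rewrite ffunE iS.
apply: (big_ind (fun v => #|Q M a0 S| <= v)%N).
- exact: max_card.
- by move=> u v hu hv; rewrite leq_min hu hv.
move=> F /asboolP cov.
apply: (leq_trans _ (leq_imset_card (fun p : {ffun 'I_n -> 'I_m} => canf a0 S p) F)).
apply: subset_leq_card; apply/fintype.subsetP => p; rewrite inE => /andP[cp /asboolP[x [Xx hx]]].
have [i iF [_ hi]] := cov x Xx.
apply/imsetP; exists i => //; apply: (canon_eq cp (canf_canon _ _ _)).
by move=> j jS; rewrite ffunE jS -hi // hx.
Qed.

Lemma Q_split (m : nat) (M : 'M[nat]_m)
    (M01 : forall a b : 'I_m, M a b = 0%N \/ M a b = 1%N)
    (M2pos : forall a b : 'I_m, (0 < (M *m M) a b)%N)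
    n (a0 : 'I_m) (A B : {set 'I_n}) (g : nat) :
  (forall i, i \in A -> (i < g)%N) -> (forall i, i \in B -> (g < i)%N) ->
  #|Q M a0 (A :|: B)| = (#|Q M a0 A| * #|Q M a0 B|)%N.
Proof.
move=> hA hB.
have AnB i : i \in B -> i \notin A.
  by move=> iB; apply/negP => iA; have := hA i iA; have := hB i iB; lia.
pose phi (p : {ffun 'I_n -> 'I_m}) := (canf a0 A p, canf a0 B p).
rewrite -cardsX -(card_in_imset (f := phi)); last first.
  move=> p q; rewrite !inE => /andP[cp _] /andP[cq _] [e1 e2].
  apply: canon_eq cp cq _ => i; rewrite inE => /orP[iA|iB].
    by have := congr1 (fun f : {ffun _} => f i) e1; rewrite !ffunE iA.
  by have := congr1 (fun f : {ffun _} => f i) e2; rewrite !ffunE iB.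
apply: eq_card => -[p1 p2]; rewrite [in RHS]inE /=.
apply/imsetP/idP.
  move=> [p]; rewrite inE => /andP[cp /asboolP[x [Xx hx]]] [-> ->].
  rewrite !inE !canf_canon /=; apply/andP; split; apply/asboolP; exists x; split=> //.
    by move=> i iA; rewrite ffunE iA hx // inE iA.
  by move=> i iB; rewrite ffunE iB hx // inE iB orbT.
rewrite !inE => /andP[/andP[c1 /asboolP[x1 [X1 h1]]] /andP[c2 /asboolP[x2 [X2 h2]]]].
pose p := [ffun i => if i \in A then p1 i else p2 i].
have [c [hc1 hc2]] := glue M01 M2pos (x1 (g%:Z - 1)) (x2 (g%:Z + 1)).
pose z (t : int) := if (t < g%:Z)%R then x1 t else if t == g%:Z then c else x2 t.
exists p.
  rewrite inE; apply/andP; split.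
    apply/forallP => i; apply/implyP; rewrite inE negb_or => /andP[nA nB].
    by rewrite ffunE (negbTE nA); exact: (implyP (forallP c2 i) nB).
  apply/asboolP; exists z; split.
    move=> t; rewrite /z.
    case: (ltrgtP (t + 1) g%:Z) => h.
    - have h' : (t < g%:Z)%R by lia.
      by rewrite h'; apply: X1.
    - case: (ltrgtP t g%:Z) => h3; first lia.
        by exact: X2.
      by rewrite -hc2 h3.
    - have h' : (t < g%:Z)%R by lia.
      rewrite h'.
      have -> : t = (g%:Z - 1)%R by lia.
      exact: hc1.
  move=> i; rewrite inE => /orP[iA|iB].
    rewrite /z ifT; last by have := hA i iA; lia.
    by rewrite ffunE iA h1.
  have := hB i iB => gi.
  rewrite /z ifF; last by apply/negbTE; rewrite -leNgt; lia.
  rewrite ifF; last by apply/negbTE; apply/eqP; lia.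
  by rewrite ffunE (negbTE (AnB i iB)) h2.
congr (_, _).
  apply: (canon_eq c1 (canf_canon _ _ _)).
  by move=> i iA; rewrite !ffunE iA.
apply: (canon_eq c2 (canf_canon _ _ _)).
by move=> i iB; rewrite !ffunE iB (negbTE (AnB i iB)).
Qed.

Definition ival n (u k : nat) : {set 'I_n} := [set i : 'I_n | (u <= i < u + k)%N].

Lemma Q_ival (m : nat) (M : 'M[nat]_m) n (a0 : 'I_m) (u k : nat) :
  (u + k <= n)%N -> #|Q M a0 (ival n u k)| = #|lang M k|.
Proof.
move=> ukn.
pose psi (w : k.-tuple 'I_m) := canf a0 (ival n u k) (fun i => nth a0 w (i - u)).
have psi_inj : injective psi.
  move=> w w' e; apply: val_inj; apply: (@eq_from_nth _ a0); first by rewrite !size_tuple.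
  move=> j; rewrite size_tuple => jk.
  have ujn : (u + j < n)%N by lia.
  have := congr1 (fun f : {ffun _} => f (Ordinal ujn)) e.
  by rewrite /psi !ffunE inE /= leq_addr ltn_add2l jk /= addKn.
rewrite -(card_imset _ psi_inj); apply: eq_card => p.
apply/idP/imsetP.
  rewrite inE => /andP[cp /asboolP[x [Xx hx]]].
  pose w := [tuple x (u%:Z + (l : nat)%:Z)%R | l < k].
  exists w.
    rewrite inE; apply/asboolP; exists x => //; exists u%:Z => i.
    by rewrite tnth_mktuple.
  apply: (canon_eq cp (canf_canon _ _ _)) => i iI.
  move: (iI); rewrite inE => /andP[ui iu].
  have ik : (i - u < k)%N by lia.
  rewrite ffunE iI -hx // (nth_mktuple _ _ (Ordinal ik)) /=.
  congr x; lia.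
move=> [w]; rewrite inE => /asboolP[x Xx [j0 hj]] ->.
rewrite inE canf_canon /=; apply/asboolP.
exists (fun t => x (t + (j0 - u%:Z))%R); split; first exact: SFT_shift.
move=> i iI; rewrite ffunE iI.
move: (iI); rewrite inE => /andP[ui iu].
have ik : (i - u < k)%N by lia.
have := hj (Ordinal ik); rewrite (tnth_nth a0) /= => <-.
congr x; lia.
Qed.

Local Close Scope ring_scope.

Lemma Q_gt0 (m : nat) (M : 'M[nat]_m) n (a0 : 'I_m) (S : {set 'I_n}) :
  (exists x, SFT M x) -> (0 < #|Q M a0 S|)%N.
Proof.
move=> [x Xx]; apply/card_gt0P; exists (canf a0 S (fun i => x (Posz (i : nat)))).
rewrite inE canf_canon /=; apply/asboolP; exists x; split => // i iS.
by rewrite ffunE iS.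
Qed.

Lemma lang_gt0 (m : nat) (M : 'M[nat]_m) (a0 : 'I_m) k :
  (exists x, SFT M x) -> (0 < #|lang M k|)%N.
Proof.
move=> X0; rewrite -(@Q_ival _ M (0 + k) a0 0 k) //; exact: Q_gt0.
Qed.

Lemma lang0 (m : nat) (M : 'M[nat]_m) (a0 : 'I_m) :
  (exists x, SFT M x) -> #|lang M 0| = 1%N.
Proof.
move=> X0; apply/eqP; rewrite eqn_leq (lang_gt0 a0 0 X0) andbT.
by apply: leq_trans (max_card _) _; rewrite card_tuple expn0.
Qed.

Definition memn n (S : {set 'I_n}) (i : nat) : bool := [exists j in S, val j == i].

Lemma memnE n (S : {set 'I_n}) (i : 'I_n) : memn S i = (i \in S).
Proof.
apply/existsP/idP => [[j /andP[jS /eqP e]]|iS]; last by exists i; rewrite iS eqxx.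
by move: e => /val_inj <-.
Qed.

Lemma memn_lt n (S : {set 'I_n}) i : memn S i -> (i < n)%N.
Proof. rewrite /memn => /existsP[j]. case/andP => _ /eqP <-. exact: ltn_ord. Qed.

Fixpoint rl (s : nat -> bool) (i : nat) : nat :=
  match i with 0 => nat_of_bool (s 0) | i'.+1 => if s i'.+1 then (rl s i').+1 else 0 end.

Lemma rl_le s i : (rl s i <= i.+1)%N.
Proof. by elim: i => [|i IH] /=; [case: (s 0)| case: (s i.+1)]. Qed.

Lemma rl_ge s i j : (j <= i)%N -> (j < rl s i)%N = [forall l : 'I_j.+1, s (i - l)].
Proof.
elim: i j => [|i IH] j.
  rewrite leqn0 => /eqP ->; apply/idP/forallP => /=.
    by case: (s 0) => //= _ l; rewrite sub0n.
  by move=> h; have := h ord0; rewrite sub0n /= => ->.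
move=> ji /=; case: j ji => [|j] ji.
  case: (boolP (s i.+1)) => h /=.
    by apply/esym/forallP => l; rewrite (ord1 l) subn0.
  by apply/esym/negbTE/negP => /forallP /(_ ord0); rewrite subn0 (negbTE h).
case: (boolP (s i.+1)) => h /=.
  rewrite ltnS IH //; apply/forallP/forallP => H l.
    case: l => [[|l] lj]; first by rewrite subn0.
    by have := H (Ordinal (lj : l < j.+1)%N); rewrite /= subSS.
  have lj : ((l : nat).+1 < j.+2)%N by rewrite ltnS.
  by have := H (Ordinal lj); rewrite /= subSS.
by apply/esym/negbTE/negP => /forallP /(_ ord0); rewrite subn0 (negbTE h).
Qed.

Lemma rl_stop s i : (rl s i <= i)%N -> ~~ s (i - rl s i).
Proof.
elim: i => [|i IH] /=; first by case: (s 0).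
case: (boolP (s i.+1)) => h //.
Qed.

Lemma rl_in s i l : (l < rl s i)%N -> s (i - l).
Proof.
move=> h; have li : (l <= i)%N by have := rl_le s i; lia.
by move: h; rewrite rl_ge // => /forallP /(_ (Ordinal (ltnSn l))).
Qed.

Lemma rl_gt0 s i : (0 < rl s i)%N = s i.
Proof.
rewrite rl_ge //; apply/forallP/idP => [/(_ ord0)|h l]; first by rewrite subn0.
by rewrite (ord1 l) subn0.
Qed.

Local Open Scope ring_scope.

Definition fL (R : realType) m (M : 'M[nat]_m) (k : nat) : R := ln (#|lang M k|%:R).
Definition dL (R : realType) m (M : 'M[nat]_m) (j : nat) : R := fL R M j - fL R M j.-1.
Definition pre n (S : {set 'I_n}) (t : nat) : {set 'I_n} := [set i in S | (i < t)%N].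

Lemma lnQ_ival (R : realType) (m : nat) (M : 'M[nat]_m) n (a0 : 'I_m) (u k : nat) :
  (u + k <= n)%N -> ln (#|Q M a0 (ival n u k)|%:R : R) = fL R M k.
Proof. by move=> h; rewrite Q_ival. Qed.

Lemma ln_pre (R : realType) (m : nat) (M : 'M[nat]_m)
    (M01 : forall a b : 'I_m, M a b = 0%N \/ M a b = 1%N)
    (M2pos : forall a b : 'I_m, (0 < (M *m M) a b)%N)
    n (a0 : 'I_m) (S : {set 'I_n}) (t : nat) :
  (t <= n)%N ->
  ln (#|Q M a0 (pre S t)|%:R : R) = \sum_(i < t) dL R M (rl (memn S) i).
Proof.
have X0 := SFT_nonempty M01 M2pos a0.
set s := memn S.
have pos (T : {set 'I_n}) : (0 < #|Q M a0 T|%:R :> R).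
  by rewrite ltr0n; apply: Q_gt0.
elim: t => [|t IH] tn.
  rewrite big_ord0.
  have -> : pre S 0 = ival n 0 0 by apply/finset.setP => i; rewrite !inE ltn0 andbF.
  by rewrite lnQ_ival // /fL lang0 // ln1.
rewrite big_ord_recr /= -IH; last lia.
set r := rl s t.
case: (boolP (s t)) => st; last first.
  have r0 : r = 0%N by apply/eqP; rewrite -leqn0 leqNgt /r rl_gt0.
  rewrite r0 /dL subrr addr0.
  congr (ln _%:R); apply: eq_card => p; congr (p \in Q M a0 _).
  apply/finset.setP => i; rewrite !inE ltnS leq_eqVlt.
  case: (boolP (i == t :> nat)) => [/eqP it|] //=.
  by rewrite -memnE -/s it (negbTE st).
have rle := rl_le s t.
have rpos : (0 < r)%N by rewrite /r rl_gt0.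
have sin i : (i <= t)%N -> (t - i < r)%N -> s i.
  by move=> it h; have := rl_in h; rewrite subKn.
case: (ltnP t r) => tr.
  have rt : r = t.+1 by lia.
  have -> : pre S t.+1 = ival n 0 t.+1.
    apply/finset.setP => i; rewrite !inE /=.
    case: (ltnP i t.+1) => it; rewrite ?andbT ?andbF //.
    by rewrite -memnE; apply: sin; lia.
  have -> : pre S t = ival n 0 t.
    apply/finset.setP => i; rewrite !inE /=.
    case: (ltnP i t) => it; rewrite ?andbT ?andbF //.
    by rewrite -memnE; apply: sin; lia.
  rewrite !lnQ_ival //; last lia.
  by rewrite /dL -/r rt /=; ring.
set g := (t - r)%N.
have sg : ~~ s g by apply: rl_stop.
have split_pre k : (k <= r)%N ->
    pre S (g + k).+1 = pre S g :|: ival n g.+1 k.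
  move=> kr; apply/finset.setP => i; rewrite !inE /=.
  case: (ltngtP i g) => ig.
  - by rewrite andbT /=; have -> : (i < (g + k).+1)%N by lia.
  - rewrite andbF /= addSn ltnS.
    case: (leqP i (g + k)) => ik; rewrite ?andbT ?andbF //.
    by rewrite -memnE; apply: sin; lia.
  - by rewrite -memnE -/s ig (negbTE sg) andbF.
have e1 : t.+1 = (g + r).+1 by lia.
have e2 : (r <= t)%N -> t = (g + r.-1).+1 by lia.
rewrite {1}e1 split_pre // (e2 tr) split_pre; last lia.
have hA : forall i : 'I_n, i \in pre S g -> (i < g)%N.
  by move=> i; rewrite inE => /andP[].
have hB k : forall i : 'I_n, i \in ival n g.+1 k -> (g < i)%N.
  by move=> i; rewrite inE => /andP[].
rewrite !(Q_split M01 M2pos a0 hA (hB _)) !natrM !lnM ?inE ?pos //.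
rewrite !lnQ_ival; [|lia|lia].
by rewrite /dL -/r; ring.
all: by rewrite posrE pos.
Qed.

Lemma card_supsets (T : finType) (A : {set T}) :
  #|[set S : {set T} | A \subset S]%SET| = (2 ^ (#|T| - #|A|))%N.
Proof.
have -> : (#|T| - #|A|)%N = #|~: A| by rewrite -(cardsC A) addKn.
rewrite -card_powerset.
have -> : [set S : {set T} | A \subset S]%SET = (fun U => U :|: A) @: powerset (~: A).
  apply/finset.setP => S; rewrite inE; apply/idP/imsetP.
    move=> AS; exists (S :\: A); first by rewrite powersetE; apply/fintype.subsetP => x; rewrite !inE => /andP[].
    by rewrite finset.setUC finset.setDE finset.setUIr finset.setUCr finset.setIT; apply/esym/finset.setUidPr.
  by move=> [U _ ->]; apply: finset.subsetUr.
apply: card_in_imset => U V; rewrite !powersetE => hU hV e.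
have key (W : {set T}) : W \subset ~: A -> (W :|: A) :&: ~: A = W.
  by move=> h; rewrite finset.setIUl finset.setICr finset.setU0; apply/finset.setIidPl.
by rewrite -(key U hU) -(key V hV) e.
Qed.

Lemma card_ival n u k : (u + k <= n)%N -> #|ival n u k| = k.
Proof.
elim: k => [|k IH] h.
  by apply/eqP; rewrite cards_eq0; apply/eqP/finset.setP => i; rewrite !inE addn0; lia.
have ukn : (u + k < n)%N by lia.
have -> : ival n u k.+1 = Ordinal ukn |: ival n u k.
  apply/finset.setP => i; rewrite !inE -val_eqE /=; lia.
rewrite cardsU1 IH; last lia.
by rewrite inE /= ltnn andbF.
Qed.

Definition eL (R : realType) m (M : 'M[nat]_m) (j : nat) : R := dL R M j - dL R M j.-1.
Definition aL (R : realType) m (M : 'M[nat]_m) (i : nat) : R :=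
  \sum_(j < i.+1) eL R M j.+1 / 2 ^+ j.+1.

Lemma dL_tel (R : realType) m (M : 'M[nat]_m) r :
  dL R M r = \sum_(j < r) eL R M j.+1.
Proof.
elim: r => [|r IH]; first by rewrite big_ord0 /dL subrr.
by rewrite big_ord_recr /= -IH /eL /=; ring.
Qed.

Lemma rl_ival n (S : {set 'I_n}) i j : (i < n)%N -> (j <= i)%N ->
  (j < rl (memn S) i)%N = (ival n (i - j) j.+1 \subset S).
Proof.
move=> ilt ji; rewrite rl_ge //; apply/forallP/fintype.subsetP.
  move=> H o; rewrite inE => /andP[h1 h2].
  have lj : (i - o < j.+1)%N by lia.
  have := H (Ordinal lj) => /=.
  have -> : (i - (i - o))%N = o by lia.
  by rewrite memnE.
move=> H l.
have hl : (i - l < n)%N by lia.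
rewrite (_ : (i - l)%N = Ordinal hl) // memnE; apply: H.
rewrite inE /=; have := ltn_ord l; lia.
Qed.

Lemma sum_S_dL (R : realType) m (M : 'M[nat]_m) n i : (i < n)%N ->
  \sum_(S : {set 'I_n}) dL R M (rl (memn S) i) =
  \sum_(j < i.+1) eL R M j.+1 * (2 ^ (n - j.+1))%N%:R.
Proof.
move=> ilt.
under eq_bigr => S _ do rewrite dL_tel (big_ord_widen _ (fun j => eL R M j.+1) (rl_le _ i)) big_mkcond.
rewrite exchange_big /=; apply: eq_bigr => j _.
rewrite -big_mkcond /= sumr_const mulr_natr; congr (_ *+ _).
have jle : (j <= i)%N by have := ltn_ord j; lia.
transitivity #|[set S : {set 'I_n} | ival n (i - j) j.+1 \subset S]%SET|.
  by apply: eq_card => S; rewrite !inE /= -rl_ival // -subn_eq0; lia.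
by rewrite card_supsets card_ord card_ival //; lia.
Qed.

Lemma pre_full n (S : {set 'I_n}) : pre S n = S.
Proof. by apply/finset.setP => i; rewrite !inE ltn_ord andbT. Qed.

Lemma asc_aL (R : realType) (m : nat) (M : 'M[nat]_m)
    (M01 : forall a b : 'I_m, M a b = 0%N \/ M a b = 1%N)
    (M2pos : forall a b : 'I_m, (0 < (M *m M) a b)%N) (a0 : 'I_m) n :
  asc_term R M n = n%:R^-1 * \sum_(i < n) aL R M i.
Proof.
rewrite /asc_term; congr (_ * _).
under eq_bigr => S _ do rewrite (N_US_Q M a0 S) -[in Q _ _ S](pre_full S) (ln_pre R M01 M2pos a0 S (leqnn n)).
rewrite -mulr_sumr exchange_big /= mulr_sumr; apply: eq_bigr => i _.
rewrite sum_S_dL // /aL mulr_sumr; apply: eq_bigr => j _.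
have jn : (j.+1 <= n)%N by have := ltn_ord j; have := ltn_ord i; lia.
have e : (2:R) ^+ n = 2 ^+ (n - j.+1) * 2 ^+ j.+1 by rewrite -exprD subnK.
rewrite natrX e; field.
by rewrite !expf_neq0.
Qed.

Lemma sum1 (R : realType) (F : nat -> R) n : F 0%N = 0 ->
  \sum_(1 <= k < n) F k = \sum_(k < n) F k.
Proof.
move=> F0; case: n => [|n]; first by rewrite big_geq // big_ord0.
by rewrite -(big_mkord xpredT) big_nat_recl // F0 add0r big_add1.

Qed.

Lemma fL0 (R : realType) (m : nat) (M : 'M[nat]_m) (a0 : 'I_m) :
  (exists x, SFT M x) -> fL R M 0 = 0.
Proof. by move=> X0; rewrite /fL lang0 // ln1. Qed.

Lemma rhsE (R : realType) (m : nat) (M : 'M[nat]_m) k :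
  rhs_term R M k = fL R M k / 2 ^+ k.
Proof. by []. Qed.

Lemma aL_eq (R : realType) (m : nat) (M : 'M[nat]_m) (a0 : 'I_m) :
  (exists x, SFT M x) -> forall i,
  aL R M i = rhs_term R M i.+1 + 4^-1 * \sum_(1 <= k < i) rhs_term R M k.
Proof.
move=> X0; have f0 := fL0 R a0 X0.
have r0 : rhs_term R M 0 = 0 by rewrite rhsE f0 mul0r.
elim=> [|i IH].
  rewrite /aL big_ord_recr big_ord0 big_geq // /eL /dL /= !rhsE f0.
  by rewrite !subr0 add0r mulr0 addr0.
rewrite /aL big_ord_recr /= -/(aL R M i) IH !sum1 // big_ord_recr /=.
rewrite !rhsE /eL /dL /= !exprS; field.
by rewrite expf_neq0.
Qed.

Lemma rhs_ge0 (R : realType) (m : nat) (M : 'M[nat]_m) (a0 : 'I_m) k :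
  (exists x, SFT M x) -> 0 <= rhs_term R M k.
Proof.
move=> X0; rewrite rhsE divr_ge0 ?exprn_ge0 // /fL ln_ge0 // ler1n.
exact: lang_gt0 a0 k X0.
Qed.

Lemma rhs_le (R : realType) (m : nat) (M : 'M[nat]_m) (a0 : 'I_m) k :
  (exists x, SFT M x) -> rhs_term R M k <= k%:R * ln m%:R / 2 ^+ k.
Proof.
move=> X0; rewrite rhsE ler_wpM2r ?invr_ge0 ?exprn_ge0 //.
have m0 : (0 < m)%N by case: (a0) => i; lia.
rewrite /fL mulrC mulr_natr -lnXn ?ltr0n // -natrX.
rewrite ler_ln ?posrE ?ltr0n ?expn_gt0 ?m0 ?lang_gt0 // ler_nat.
by apply: leq_trans (max_card _) _; rewrite card_tuple card_ord.
Qed.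

Lemma sumk (R : realType) n :
  \sum_(k < n) (k%:R / 2 ^+ k : R) = 2 - n.+1%:R * 2 / 2 ^+ n.
Proof.
elim: n => [|n IH]; first by rewrite big_ord0 expr0; lra.
rewrite big_ord_recr /= IH exprS -!natr1; field.
by rewrite expf_neq0.
Qed.

Lemma Ps_le (R : realType) (m : nat) (M : 'M[nat]_m) (a0 : 'I_m) n :
  (exists x, SFT M x) -> \sum_(1 <= k < n) rhs_term R M k <= 2 * ln m%:R.
Proof.
move=> X0.
have m0 : (0 < m)%N by case: (a0) => i; lia.
have lm : 0 <= ln (m%:R : R) by rewrite ln_ge0 // ler1n.
rewrite sum1; last by rewrite rhsE (fL0 R a0 X0) mul0r.
have H : \sum_(k < n) rhs_term R M k <= \sum_(k < n) (k%:R / 2 ^+ k) * ln m%:R.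
  apply: ler_sum => k _; rewrite (le_trans (rhs_le R a0 k X0)) //.
  by rewrite mulrAC.
apply: le_trans H _.
rewrite -mulr_suml sumk; apply: (ler_wpM2r lm); rewrite lerBlDr lerDl.
by apply: divr_ge0; [apply: mulr_ge0 | apply: exprn_ge0].
Qed.

Lemma main_pos (R : realType) (m : nat) (M : 'M[nat]_m)
    (M01 : forall a b : 'I_m, M a b = 0%N \/ M a b = 1%N)
    (M2pos : forall a b : 'I_m, (0 < (M *m M) a b)%N) (a0 : 'I_m) :
  cvgn ((fun n => \sum_(1 <= k < n) rhs_term R M k) : R^nat) /\
  asc_term R M @ \oo -->
    (1 / 4 : R) * \big[+%R/0%R]_(1 <= k <oo) rhs_term R M k.
Proof.
have X0 := SFT_nonempty M01 M2pos a0.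
set Ps := (fun n => \sum_(1 <= k < n) rhs_term R M k) : R^nat.
have r0 : rhs_term R M 0 = 0 by rewrite rhsE (fL0 R a0 X0) mul0r.
have PsS n : Ps n.+1 = Ps n + rhs_term R M n.
  by rewrite /Ps !sum1 // big_ord_recr.
have cP : cvgn Ps.
  apply: nondecreasing_is_cvgn.
    by apply/nondecreasing_seqP => n; rewrite PsS lerDl (rhs_ge0 R a0 n X0).
  by exists (2 * ln m%:R) => _ [n _ <-]; exact: Ps_le.
split => //.
set L := limn Ps.
have PL : Ps @ \oo --> L by [].
have rhs0 : rhs_term R M n @[n --> \oo] --> 0.
  have -> : (fun n => rhs_term R M n) = (fun n => Ps n.+1 - Ps n).
    by apply/funext => n; rewrite PsS addrC addKr.
  rewrite -(subrr L); apply: cvgB => //.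
  by rewrite (cvg_shiftS Ps).
have aLc : aL R M @ \oo --> 4^-1 * L.
  have -> : aL R M = (fun n => rhs_term R M n.+1 + 4^-1 * Ps n).
    by apply/funext => n; rewrite (aL_eq R a0 X0).
  rewrite -[X in _ --> X]add0r; apply: cvgD.
    by rewrite (cvg_shiftS (fun n => rhs_term R M n)).
  by apply: cvgM => //; exact: cvg_cst.
rewrite -cvg_shiftS div1r.
have -> : (fun n => asc_term R M n.+1) = arithmetic_mean (aL R M).
  apply/funext => n; rewrite (asc_aL R M01 M2pos a0) /arithmetic_mean /series /=.
  by rewrite big_mkord.
exact: cesaro.
Qed.

Lemma main_zero (R : realType) (M : 'M[nat]_0) :
  cvgn ((fun n => \sum_(1 <= k < n) rhs_term R M k) : R^nat) /\
  asc_term R M @ \oo -->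
    (1 / 4 : R) * \big[+%R/0%R]_(1 <= k <oo) rhs_term R M k.
Proof.
have noX x : ~ SFT M x by move=> _; case: (x 0).
have r0 k : rhs_term R M k = 0.
  rewrite rhsE /fL.
  have -> : #|lang M k| = 0%N.
    apply/eqP; rewrite cards_eq0; apply/eqP/finset.setP => w; rewrite !inE.
    by apply/negbTE/negP => /asboolP[x Xx _]; apply: (noX x).
  by rewrite ln0 // mul0r.
have a0 n : asc_term R M n = 0.
  rewrite /asc_term big1 ?mulr0 // => S _.
  have -> : N_US M S = 0%N.
    apply/eqP; rewrite -leqn0 /N_US /Ncov.
    apply: (@leq_trans #|(finset.set0 : {set {ffun 'I_n -> 'I_0}})|); last by rewrite cards0.
    apply: bigmin_le_nat; first exact: mem_index_enum.
    by apply/asboolP => y Xy; case: (noX y).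
  by rewrite ln0 // mulr0.
have Ps0 : (fun n => \sum_(1 <= k < n) rhs_term R M k) = (fun=> 0 : R).
  by apply/funext => n; rewrite big1.
have lim0 : (1/4:R) * \big[+%R/0%R]_(1 <= k <oo) rhs_term R M k = 0.
  by rewrite Ps0 lim_cst ?mulr0 //; apply: norm_hausdorff.
rewrite lim0 Ps0; split; first exact: (cvgP _ (cvg_cst _)).
have -> : asc_term R M = (fun=> 0) by apply/funext.
exact: cvg_cst.
Qed.

Unset Implicit Arguments.

Theorem theorem4p2 (R : realType) (m : nat) (M : 'M[nat]_m)
    (M01 : forall a b : 'I_m, M a b = 0%N \/ M a b = 1%N)
    (M2pos : forall a b : 'I_m, (0 < (M *m M) a b)%N) :
  cvgn ((fun n => \sum_(1 <= k < n) rhs_term R M k) : R^nat) /\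
  asc_term R M @ \oo -->
    (1 / 4 : R) * \big[+%R/0%R]_(1 <= k <oo) rhs_term R M k.
Proof.
case: m M M01 M2pos => [|m] M M01 M2pos; first exact: main_zero.
exact: (main_pos R M01 M2pos ord0).
Qed.
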